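(* Let $\Omega$ be a compact metric space, $\varphi:\Omega\to\Omega$ continuous, and let $\{V_n\}\subset\mathcal{L}(X^* )$ be an ergodic operator sequence converging in the $\mathrm{W^*O}$-topology to an operator $Q$. Then for every $\varphi$-ergodic Borel probability measure $\mu$ on $\Omega$ there exists $\omega\in\Omega$ with $Q\delta_\omega=\mu$, i.e. $V_n\delta_\omega\to\mu$ weak-star.
   Context: $X=C(\Omega)$, $X^*$ the space of Radon measures, pairing $(x,\mu)$; $Ux=x\circ\varphi$, $V=U^*$. $\mathrm{W^*O}$-convergence $T_n\to T$ means $(x,T_n\mu)\to(x,T\mu)$ for all $x\in X,\mu\in X^*$. A sequence $\{V_n\}\subseteq\operatorname{co}\{V^k:k\in\mathbb{N}_0\}$ is ergodic if $(x,(\operatorname{Id}-V)V_n\mu)\to0$ for all $x\in X,\mu\in X^*$. $\delta_\omega$ denotes the Dirac measure at $\omega$. *)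

(* Defs.v *)
From mathcomp Require Import all_boot all_order all_algebra.
From mathcomp Require Import all_classical all_reals all_analysis.
Set Implicit Arguments. Unset Strict Implicit. Unset Printing Implicit Defensive.
Import Order.TTheory GRing.Theory Num.Theory numFieldNormedType.Exports.
Local Open Scope classical_set_scope.
Local Open Scope ring_scope.

Section Defs.
Variables (R : realType) (T : pseudoPMetricType R).

Definition borel := g_sigma_algebraType (@open T).

(* X = C(Omega) (real valued); an element x : T -> R is in X iff continuous x.
   Xstar = the (topological) dual of C(Omega), i.e. bounded linear functionals on
   C(Omega) (= Radon measures by Riesz).  A functional nu : (T -> R) -> R
   represents an element of Xstar if it is linear and bounded on C(Omega);
   its values off C(Omega) are irrelevant. *)
Definition in_dual (nu : (T -> R) -> R) : Prop :=
  (forall x y : T -> R, continuous x -> continuous y -> nu (x \+ y) = nu x + nu y) /\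
  (forall (a : R) (x : T -> R), continuous x -> nu (fun t => a * x t) = a * nu x) /\
  (exists M : R, forall (x : T -> R) (c : R), continuous x ->
      (forall t, `|x t| <= c) -> `|nu x| <= M * c).

Definition in_LXstar (Q : ((T -> R) -> R) -> ((T -> R) -> R)) : Prop :=
  (forall nu, in_dual nu -> in_dual (Q nu)) /\
  (forall nu1 nu2 x, in_dual nu1 -> in_dual nu2 -> continuous x ->
      Q (fun y => nu1 y + nu2 y) x = Q nu1 x + Q nu2 x) /\
  (forall (a : R) nu x, in_dual nu -> continuous x ->
      Q (fun y => a * nu y) x = a * Q nu x) /\
  (exists M : R, forall nu (d c : R) x, in_dual nu ->
      (forall y : T -> R, continuous y -> (forall t, `|y t| <= 1) -> `|nu y| <= d) ->
      continuous x -> (forall t, `|x t| <= c) -> `|Q nu x| <= M * d * c).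

(* V = U^*, with U x = x \o phi; so (x, V^k nu) = nu (x \o phi^k). *)
Definition Vpow (phi : T -> T) (k : nat) (nu : (T -> R) -> R) : (T -> R) -> R :=
  fun x => nu (x \o iter k phi).

(* An element of co{V^k : k in N_0} is a finite convex combination
   sum_k w_k V^k, given by its weight list w (w_k >= 0, sum w_k = 1). *)
Definition convex_weights (w : seq R) : Prop :=
  (forall k, (k < size w)%N -> 0 <= w`_k) /\ \sum_(k < size w) w`_k = 1.

Definition convop (phi : T -> T) (w : seq R) (nu : (T -> R) -> R) : (T -> R) -> R :=
  fun x => \sum_(k < size w) w`_k * Vpow phi k nu x.

Definition ergodic_seq (phi : T -> T) (w : nat -> seq R) : Prop :=
  (forall n, convex_weights (w n)) /\
  forall (x : T -> R) nu, continuous x -> in_dual nu ->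
    (fun n => convop phi (w n) nu x - Vpow phi 1 (convop phi (w n) nu) x) @ \oo --> 0.

Definition WstarO_cvg (phi : T -> T) (w : nat -> seq R)
    (Q : ((T -> R) -> R) -> ((T -> R) -> R)) : Prop :=
  forall (x : T -> R) nu, continuous x -> in_dual nu ->
    (fun n => convop phi (w n) nu x) @ \oo --> Q nu x.

Definition dirac_fun (om : T) : (T -> R) -> R := fun x => x om.

Definition phi_ergodic (phi : T -> T) (mu : probability borel R) : Prop :=
  (forall A : set borel, measurable A -> mu (phi @^-1` A) = mu A) /\
  (forall A : set borel, measurable A -> phi @^-1` A = A ->
     mu A = 0%E \/ mu A = 1%E).

End Defs.

(* Main.v *)
Require Import Defs.
From mathcomp Require Import all_boot all_order all_algebra.
From mathcomp Require Import all_classical all_reals all_analysis.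
From mathcomp Require Import lra measurable_realfun.
Import Order.TTheory GRing.Theory Num.Theory numFieldNormedType.Exports.
Local Open Scope classical_set_scope.
Local Open Scope ring_scope.

Section EB.
Context (R : realType) (T : pseudoPMetricType R) (Hcpt : compact [set: T]).

Lemma enum_basis : exists b : nat -> set T, (forall n, open (b n)) /\
  (forall t (O : set T), open O -> O t -> exists n, b n t /\ b n `<=` O).
Proof.
have [B cB [BO Bb]] := @compact_second_countable R T Hcpt.
have /countable_injP [f finj] := cB.
exists (fun n => \bigcup_(U in [set U | B U /\ f U = n]) U); split.
  by move=> n; apply: bigcup_open => U [BU _]; exact: BO.
move=> t O oO Ot.
have : nbhs t O by apply: open_nbhs_nbhs.
move=> /Bb [U [BU Ut] UO].
exists (f U); split; first by exists U.
move=> s [V [BV fV] Vs]; apply: UO.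
by have -> : U = V by apply: finj; rewrite ?inE.
Qed.
End EB.

Lemma sum_bounds (R : realType) (z e : R) (u : nat -> R) : 0 < e -> 0 <= z ->
  (forall j, 0 <= u j <= 1) -> (forall j, j.+1%:R * e <= z -> u j = 1) ->
  (forall j, z <= j%:R * e -> u j = 0) -> forall N : nat,
  (\sum_(j < N) e * u j <= z + e /\ \sum_(j < N) e * u j <= N%:R * e) /\
  (z - e <= \sum_(j < N) e * u j \/ N%:R * e <= \sum_(j < N) e * u j).
Proof.
move=> e0 z0 u01 u1 u0; elim=> [|N [[U1 U2] L]].
  by rewrite big_ord0 mul0r; split; [split; lra | right].
rewrite big_ord_recr /=.
set S := \sum_(i < N) _ in U1 U2 L *.
have -> : N.+1%:R * e = N%:R * e + e by rewrite -natr1 mulrDl mul1r.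
set ne := N%:R * e in U2 L *.
have /andP [v0 v1] := u01 N.
have ve0 : 0 <= e * u N by rewrite mulr_ge0 // ltW.
have ve1 : e * u N <= e by rewrite -[X in _ <= X]mulr1 ler_wpM2l // ltW.
case: (leP (ne + e) z) => h1.
  have : u N = 1 by apply: u1; rewrite -natr1 mulrDl mul1r.
  move=> ->; rewrite mulr1.
  split; [split; lra|].
  case: L => L; [left|right]; lra.
case: (leP z ne) => h0.
  have : u N = 0 by apply: u0.
  move=> ->; rewrite mulr0 addr0.
  split; [split; lra|].
  case: L => L; left; lra.
split; [split; lra|].
case: L => L; left; lra.
Qed.

Section Dens.
Context (R : realType) (T : pseudoPMetricType R) (Hcpt : compact [set: T]).
Variables (b : nat -> set T) (bo : forall n, open (b n))
  (bb : forall t (O : set T), open O -> O t -> exists n, b n t /\ b n `<=` O).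

Definition Ub (s : seq nat) : set T := \bigcup_(i in [set i | i \in s]) b i.

Lemma Ub_open s : open (Ub s).
Proof. by apply: bigcup_open => i _; exact: bo. Qed.

Lemma cover_fin (C O : set T) : closed C -> open O -> C `<=` O ->
  exists s, C `<=` Ub s /\ Ub s `<=` O.
Proof.
move=> cC oO CO.
have Cc : compact C := subclosed_compact cC Hcpt (subsetT C).
move: Cc; rewrite compact_cover => /(_ nat [set n | b n `<=` O] b).
case.
- by move=> n _; exact: bo.
- by move=> t Ct; have [n [bnt bnO]] := bb _ _ oO (CO _ Ct); exists n.
move=> D' D'sub CD'; exists (finmap.enum_fset D'); split.
  by move=> t /CD' [i iD' bit]; exists i.
move=> t [i iD' bit].
by have /D'sub := iD'; rewrite inE => /(_ t bit).
Qed.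

Definition gU (p : seq nat * seq nat) : T -> R :=
  Urysohn (~` Ub p.2) (closure (Ub p.1)).

Lemma gU_cont p : continuous (gU p).
Proof. exact: Urysohn_continuous. Qed.

Lemma gU_range p t : 0 <= gU p t <= 1.
Proof.
have : range (gU p) (gU p t) by exists t.
by move=> /(@Urysohn_range T R) /=; rewrite in_itv.
Qed.

Lemma gU_sep p : closure (Ub p.1) `<=` Ub p.2 ->
  (forall t, Ub p.1 t -> gU p t = 1) /\ (forall t, ~ Ub p.2 t -> gU p t = 0).
Proof.
move=> sub.
have us : uniform_separator (~` Ub p.2) (closure (Ub p.1)).
  apply: (proj1 (@normal_separatorP R T) (@pseudometric_normal R T)).
  - exact/open_closedC/Ub_open.
  - exact: closed_closure.
  - by apply/seteqP; split => // t [/= nt /sub].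
split => t Ht.
  have := @Urysohn_sub1 T R _ _ us (gU p t).
  by apply; exists t => //; exact: subset_closure.
have := @Urysohn_sub0 T R _ _ us (gU p t).
by apply; exists t.
Qed.

Lemma closed_ge (x : T -> R) (c : R) : continuous x -> closed [set t | c <= x t].
Proof.
move=> cx.
have -> : [set t | c <= x t] = ~` (x @^-1` `]-oo, c[).
  by apply/seteqP; split => t /=; rewrite in_itv /= ?leNgt // => /negP.
apply: open_closedC; apply: open_comp; last exact: interval_open.
by move=> t _; exact: cx.
Qed.

Lemma open_gt (x : T -> R) (c : R) : continuous x -> open [set t | c < x t].
Proof.
move=> cx.
have -> : [set t | c < x t] = (x @^-1` `]c, +oo[).
  by apply/seteqP; split => t /=; rewrite in_itv /= andbT.
apply: open_comp; last exact: interval_open.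
by move=> t _; exact: cx.
Qed.

Lemma levels (x : T -> R) (a e : R) : continuous x -> 0 < e ->
  exists p, forall t, (a + e <= x t -> gU p t = 1) /\ (x t <= a -> gU p t = 0).
Proof.
move=> cx e0.
have e20 : 0 < e / 2 by rewrite divr_gt0.
have e2e : e / 2 < e by rewrite ltr_pdivrMr // ltr_pMr // ltr1n.
have [s1 [C1s1 s1O1]] : exists s, [set t | a + e <= x t] `<=` Ub s /\ Ub s `<=` [set t | a + e / 2 < x t].
  apply: cover_fin; [exact: closed_ge | exact: open_gt |].
  by move=> t /= h; apply: lt_le_trans h; rewrite ltrD2l.
have [s2 [C2s2 s2O]] : exists s, [set t | a + e / 2 <= x t] `<=` Ub s /\ Ub s `<=` [set t | a < x t].
  apply: cover_fin; [exact: closed_ge | exact: open_gt |].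
  by move=> t /= h; apply: lt_le_trans h; rewrite ltrDl.
have sub : closure (Ub (s1, s2).1) `<=` Ub (s1, s2).2.
  apply: subset_trans C2s2.
  have -> : [set t | a + e / 2 <= x t] = closure [set t | a + e / 2 <= x t].
    by apply/closure_id; exact: closed_ge.
  apply: closureS; apply: subset_trans s1O1 _.
  by move=> t /= /ltW.
have [H1 H0] := @gU_sep (s1, s2) sub.
exists (s1, s2) => t; split => h.
  by apply: H1; apply: C1s1.
apply: H0 => /s2O /=; by rewrite ltNge h.
Qed.

Lemma approx (x : T -> R) (e : R) : continuous x -> 0 < e ->
  exists K : R, exists N : nat, exists ps : nat -> seq nat * seq nat,
  forall t, `|x t - (K + \sum_(j < N) e * gU (ps j) t)| <= e.
Proof.
move=> cx e0.
have xc : compact (x @` [set: T]).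
  by apply: continuous_compact => //; exact: continuous_subspaceT.
have [M [_ HM]] := compact_bounded xc.
pose K0 := `|M| + 1.
have xK t : `|x t| <= K0.
  apply: (HM K0); last by exists t.
  by rewrite /K0 (le_lt_trans (ler_norm M)) // ltrDl.
pose N := (Num.truncn (2 * K0 / e)).+1.
have NK : 2 * K0 < N%:R * e by rewrite -ltr_pdivrMr //; exact: archimedean.Num.Theory.truncnS_gt.
have /choice [ps Hps] : forall j : nat, exists p, forall t,
    ((- K0 + j%:R * e) + e <= x t -> gU p t = 1) /\ (x t <= - K0 + j%:R * e -> gU p t = 0).
  by move=> j; apply: levels.
exists (- K0), N, ps => t.
have /ler_normlP [xl xr] := xK t.
have := @sum_bounds R (x t + K0) e (fun j => gU (ps j) t) e0 _ (fun j => gU_range (ps j) t) _ _ N.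
case.
- lra.
- move=> j h; apply: (proj1 (Hps j t)).
  move: h; rewrite -natr1 mulrDl mul1r; lra.
- move=> j h; apply: (proj2 (Hps j t)); lra.
set S := \sum_(j < N) _ => -[[U1 U2] L].
apply/ler_normlP; split; case: L => L; lra.
Qed.

Lemma cont_add (f g : T -> R) : continuous f -> continuous g ->
  continuous (fun t => f t + g t).
Proof. by move=> cf cg t; exact: (continuousD (cf t) (cg t)). Qed.

Lemma cont_sub (f g : T -> R) : continuous f -> continuous g ->
  continuous (fun t => f t - g t).
Proof. by move=> cf cg t; exact: (continuousB (cf t) (cg t)). Qed.

Lemma cont_scale (c : R) (f : T -> R) : continuous f ->
  continuous (fun t => c * f t).
Proof.
move=> cf t; exact: (@continuousM _ _ (fun=> c) f t (@cst_continuous _ _ c t) (cf t)).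
Qed.

Lemma dual_lin (nu : (T -> R) -> R) : in_dual nu -> forall (c e : R) (h : nat -> T -> R),
  (forall j, continuous (h j)) -> forall N : nat,
  continuous (fun t => c + \sum_(j < N) e * h j t) /\
  nu (fun t => c + \sum_(j < N) e * h j t) = nu (fun _ => c) + \sum_(j < N) e * nu (h j).
Proof.
move=> [nuD [nuZ _]] c e h ch; elim=> [|N [cN IH]].
  have -> : (fun t => c + \sum_(j < 0) e * h j t) = (fun _ => c).
    by apply: funext => t; rewrite big_ord0 addr0.
  by rewrite big_ord0 addr0; split => //; exact: cst_continuous.
have -> : (fun t => c + \sum_(j < N.+1) e * h j t) =
    (fun t => c + \sum_(j < N) e * h j t) \+ (fun t => e * h N t).
  by apply: funext => t; rewrite big_ord_recr /= addrA.
have cs : continuous (fun t => e * h N t) by exact: cont_scale.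
split; first exact: cont_add.
by rewrite nuD // IH nuZ // big_ord_recr /= addrA.
Qed.

Lemma dual_M0 (nu : (T -> R) -> R) : in_dual nu -> exists M, 0 <= M /\
  forall x c, continuous x -> (forall t, `|x t| <= c) -> `|nu x| <= M * c.
Proof.
move=> [_ [_ [M HM]]]; exists M; split => //.
have := HM (fun _ => 0) 1 (@cst_continuous _ _ 0).
rewrite normr0 mulr1 => /(_ (fun _ => ler01)).
by apply: le_trans.
Qed.

Lemma agree (nu1 nu2 : (T -> R) -> R) : in_dual nu1 -> in_dual nu2 ->
  (forall c, nu1 (fun _ => c) = nu2 (fun _ => c)) ->
  (forall p, nu1 (gU p) = nu2 (gU p)) ->
  forall x, continuous x -> nu1 x = nu2 x.
Proof.
move=> d1 d2 hc hg x cx.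
have [M1 [M10 HM1]] := @dual_M0 nu1 d1.
have [M2 [M20 HM2]] := @dual_M0 nu2 d2.
suff H : forall e, 0 < e -> `|nu1 x - nu2 x| <= (M1 + M2) * e.
  apply/eqP; rewrite -subr_eq0 -normr_le0; apply/ler_addgt0Pr => d d0.
  rewrite add0r.
  have MM : 0 < M1 + M2 + 1 by lra.
  apply: (le_trans (H (d / (M1 + M2 + 1)) _)); first by rewrite divr_gt0.
  rewrite mulrA ler_pdivrMr // mulrC; apply: ler_wpM2l; first exact: ltW.
  lra.
move=> e e0; have [K [N [ps Hap]]] := @approx x e cx e0.
have [cy ly1] := @dual_lin nu1 d1 K e _ (fun j => gU_cont (ps j)) N.
have [_ ly2] := @dual_lin nu2 d2 K e _ (fun j => gU_cont (ps j)) N.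
set y := (fun t => K + \sum_(j < N) e * gU (ps j) t) in cy ly1 ly2 Hap.
have cxy : continuous (fun t => x t - y t) by exact: cont_sub.
have ex : x = (fun t => x t - y t) \+ y by apply: funext => t /=; rewrite subrK.
have b1 := HM1 _ e cxy Hap.
have b2 := HM2 _ e cxy Hap.
rewrite ex (proj1 d1) // (proj1 d2) // ly1 ly2 hc.
under eq_bigr do rewrite hg.
set A := _ + \sum_(i < N) _.
rewrite opprD addrACA subrr addr0 mulrDl.
apply: (le_trans (ler_normB _ _)); exact: lerD.
Qed.

End Dens.

Section Aux.
Context (R : realType) (T : pseudoPMetricType R).
Local Notation B := (borel T).

Lemma open_mbl (U : set T) : open U -> measurable (U : set B).
Proof. by move=> oU; apply: sub_sigma_algebra. Qed.

Lemma cont_mfun (x : T -> R) : continuous x -> measurable_fun [set: B] (x : B -> R).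
Proof.
move=> cx; apply: (measurability _ (measurable_realfun.RGenOpens.measurableE R)).
move=> _ [_ [a [b ->] <-]]; rewrite setTI; apply: open_mbl.
by apply: open_comp; [move=> t _; exact: cx | exact: interval_open].
Qed.

Lemma cont_mfunT (f : T -> T) : continuous f -> measurable_fun [set: B] (f : B -> B).
Proof.
move=> cf; apply: (@measurability _ _ B B [set: B] f (@open T)) => //.
move=> _ [U oU <-]; rewrite setTI; apply: open_mbl.
by apply: open_comp => // t _; exact: cf.
Qed.
End Aux.

Lemma lim_leK (R : realType) (u : nat -> R) (l K : R) :
  u @ \oo --> l -> (forall n, u n <= K) -> l <= K.
Proof. by move=> hl hb; apply: (ler_cvg_to hl (cvg_cst K)); apply: nearW. Qed.

Lemma lim_geK (R : realType) (u : nat -> R) (l K : R) :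
  u @ \oo --> l -> (forall n, K <= u n) -> K <= l.
Proof. by move=> hl hb; apply: (ler_cvg_to (cvg_cst K) hl); apply: nearW. Qed.

Section Meas.
Context (R : realType) (T : pseudoPMetricType R) (Hcpt : compact [set: T])
  (phi : T -> T) (Hphi : continuous phi)
  (w : nat -> seq R) (Q : ((T -> R) -> R) -> ((T -> R) -> R))
  (Herg : ergodic_seq phi w) (HQ : in_LXstar Q) (Hcvg : WstarO_cvg phi w Q)
  (mu : probability (borel T) R) (Hmu : phi_ergodic phi mu).
Local Notation B := (borel T).

Lemma dirac_dual (om : T) : in_dual (dirac_fun om).
Proof.
split; first by [].
split; first by [].
by exists 1 => x c _ /(_ om); rewrite mul1r.
Qed.

Definition hh n (x : T -> R) (om : T) : R :=
  \sum_(k < size (w n)) (w n)`_k * x (iter k phi om).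

Lemma hhE n x om : convop phi (w n) (dirac_fun om) x = hh n x om.
Proof. by []. Qed.

Definition FF (x : T -> R) (om : T) : R := Q (dirac_fun om) x.

Lemma FF_lim x om : continuous x -> hh n x om @[n --> \oo] --> FF x om.
Proof. by move=> cx; exact: (Hcvg x (dirac_fun om) cx (dirac_dual om)). Qed.

Lemma FF_inv x om : continuous x -> FF x (phi om) = FF x om.
Proof.
move=> cx.
have h1 := (proj2 Herg) x (dirac_fun om) cx (dirac_dual om).
have E n : Vpow phi 1 (convop phi (w n) (dirac_fun om)) x = hh n x (phi om).
  by apply: eq_bigr => k _; rewrite /Vpow /= /dirac_fun /= -iterSr iterS.
have h2 : hh n x (phi om) @[n --> \oo] --> FF x om - 0.
  have -> : (fun n => hh n x (phi om)) = (fun n => hh n x om -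
     (convop phi (w n) (dirac_fun om) x - Vpow phi 1 (convop phi (w n) (dirac_fun om)) x)).
    by apply: funext => n; rewrite E hhE opprB addrC subrK.
  by apply: cvgB => //; exact: FF_lim.
rewrite subr0 in h2.
have h3 := @FF_lim x (phi om) cx.
exact: (cvg_unique _ h3 h2).

Qed.

Lemma iter_cont k : continuous (iter k phi).
Proof.
elim: k => [|k IH] t /=; first exact: cvg_id.
exact: (@continuous_comp _ _ _ (iter k phi) phi t (IH t) (Hphi _)).
Qed.

Lemma sum_cont (m : nat) (c : nat -> R) (f : nat -> T -> R) :
  (forall k, continuous (f k)) ->
  continuous (fun om => \sum_(k < m) c k * f k om).
Proof.
move=> cf; elim: m => [|m IH].
  have -> : (fun om : T => \sum_(k < 0) c k * f k om) = (fun=> 0).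
    by apply: funext => om; rewrite big_ord0.
  exact: cst_continuous.
have -> : (fun om => \sum_(k < m.+1) c k * f k om) =
    (fun om => \sum_(k < m) c k * f k om + c m * f m om).
  by apply: funext => om; rewrite big_ord_recr.
by apply: cont_add => //; apply: cont_scale.
Qed.

Lemma hh_cont n x : continuous x -> continuous (hh n x).
Proof.
move=> cx; rewrite /hh.
apply: (@sum_cont _ (fun k => (w n)`_k) (fun k om => x (iter k phi om))) => k t.
exact: (@continuous_comp _ _ _ (iter k phi) x t (iter_cont k t) (cx _)).
Qed.

Lemma hh_bound n x K om : (forall t, `|x t| <= K) -> `|hh n x om| <= K.
Proof.
move=> xK; have [w0 w1] := (proj1 Herg) n.
rewrite /hh; apply: (le_trans (ler_norm_sum _ _ _)).
apply: (@le_trans _ _ (\sum_(k < size (w n)) (w n)`_k * K)).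
  apply: ler_sum => k _; rewrite normrM ger0_norm ?w0 //.
  by apply: ler_wpM2l; [exact: w0 | exact: xK].
by rewrite -big_distrl /= w1 mul1r.
Qed.

Lemma hh_cst n c om : hh n (fun _ => c) om = c.
Proof.
have [_ w1] := (proj1 Herg) n.
by rewrite /hh -big_distrl /= w1 mul1r.
Qed.

Lemma FF_mfun x : continuous x -> measurable_fun [set: B] (FF x : B -> R).
Proof.
move=> cx; apply: (@measurable_realfun.measurable_fun_cvg _ B R [set: B] (fun n => hh n x) (FF x)).
  by move=> m; apply: cont_mfun; exact: hh_cont.
by move=> om _; exact: FF_lim.
Qed.

Lemma cont_bounded (y : T -> R) : continuous y -> exists K, forall t, `|y t| <= K.
Proof.
move=> cy.
have yc : compact (y @` [set: T]).
  by apply: continuous_compact => //; exact: continuous_subspaceT.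
have [M [_ HM]] := compact_bounded yc.
exists (`|M| + 1) => t; apply: (HM (`|M| + 1)); last by exists t.
by rewrite (le_lt_trans (ler_norm M)) // ltrDl.
Qed.

Lemma bnd_int (y : B -> R) : measurable_fun [set: B] y -> (exists K, forall t, `|y t| <= K) ->
  mu.-integrable [set: B] (EFin \o y).
Proof.
move=> my [K yK]; apply: measurable_bounded_integrable => //.
  by have := probability_setT mu; move=> /= ->; rewrite ltry.
exists K; split; first by rewrite num_real.
by move=> z Kz t _; apply: le_trans (yK t) _; exact: ltW.
Qed.

Lemma cont_int (y : T -> R) : continuous y -> mu.-integrable [set: B] (EFin \o y).
Proof. by move=> cy; apply: bnd_int; [exact: cont_mfun | exact: cont_bounded]. Qed.

Lemma int_phi (y : T -> R) : continuous y ->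
  Rintegral mu [set: B] (y \o phi) = Rintegral mu [set: B] y.
Proof.
move=> cy.
have mphi := @cont_mfunT R T phi Hphi.
have my : measurable_fun [set: B] (fun t : B => (y t)%:E).
  by apply: measurableT_comp => //; exact: cont_mfun.
have cyp : continuous (y \o phi).
  by move=> t; exact: (@continuous_comp _ _ _ phi y t (Hphi t) (cy _)).
have intf : mu.-integrable ((phi : B -> B) @^-1` [set: B]) ((EFin \o (y : B -> R)) \o (phi : B -> B)).
  by rewrite preimage_setT; have := @cont_int (y \o phi) cyp.
have E := @integral_pushforward _ _ B B R phi mphi mu [set: B] _ my intf measurableT.
rewrite preimage_setT in E.
rewrite /Rintegral; congr fine.
transitivity (\int[mu]_(x in [set: B]) ((EFin \o (y : B -> R)) \o (phi : B -> B)) x)%E; first by [].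
rewrite -E; apply: eq_measure_integral => A mA _.
by have := (proj1 Hmu) A mA.
Qed.

Lemma int_iter (y : T -> R) k : continuous y ->
  Rintegral mu [set: B] (y \o iter k phi) = Rintegral mu [set: B] y.
Proof.
move=> cy; elim: k => [|k IH]; first by [].
have ck : continuous (y \o iter k phi).
  by move=> t; exact: (@continuous_comp _ _ _ (iter k phi) y t (iter_cont k t) (cy _)).
have -> : y \o iter k.+1 phi = (y \o iter k phi) \o phi.
  by apply: funext => t /=; rewrite -iterSr.
by rewrite int_phi.
Qed.

Lemma int_sum (m : nat) (c : nat -> R) (f : nat -> T -> R) :
  (forall k, continuous (f k)) ->
  Rintegral mu [set: B] (fun om => \sum_(k < m) c k * f k om) =
  \sum_(k < m) c k * Rintegral mu [set: B] (f k).
Proof.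
move=> cf; elim: m => [|m IH].
  rewrite big_ord0.
  have -> : (fun om : T => \sum_(k < 0) c k * f k om) = (fun=> 0).
    by apply: funext => om; rewrite big_ord0.
  by rewrite Rintegral_cst // mul0r.
have -> : (fun om => \sum_(k < m.+1) c k * f k om) =
    (fun om => \sum_(k < m) c k * f k om + c m * f m om).
  by apply: funext => om; rewrite big_ord_recr.
rewrite RintegralD //; last 2 first.
- exact/cont_int/sum_cont.
- exact/cont_int/cont_scale.
by rewrite IH RintegralZl // ?big_ord_recr //; exact: cont_int.
Qed.

Lemma int_hh n y : continuous y ->
  Rintegral mu [set: B] (hh n y) = Rintegral mu [set: B] y.
Proof.
move=> cy; have [_ w1] := (proj1 Herg) n.
rewrite /hh (@int_sum _ (fun k => (w n)`_k) (fun k om => y (iter k phi om))).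
  under eq_bigr do rewrite (int_iter _ _ cy).
  by rewrite -big_distrl /= w1 mul1r.
move=> k t; exact: (@continuous_comp _ _ _ (iter k phi) y t (iter_cont k t) (cy _)).
Qed.

Lemma int_FF y : continuous y ->
  Rintegral mu [set: B] (FF y) = Rintegral mu [set: B] y.
Proof.
move=> cy; have [K yK] := @cont_bounded y cy.
have h1 : forall n, measurable_fun [set: B] (fun om : B => (hh n y om)%:E).
  move=> n; apply: measurableT_comp => //; apply: cont_mfun; exact: hh_cont.
have h2 : measurable_fun [set: B] (fun om : B => (FF y om)%:E).
  by apply: measurableT_comp => //; exact: FF_mfun.
have h3 : {ae mu, forall om : B, [set: B] om ->
    (fun n => (hh n y om)%:E) @ \oo --> (FF y om)%:E}.
  apply: aeW => om _; apply: cvg_EFin; first exact: nearW.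
  exact: FF_lim.
have h4 : mu.-integrable [set: B] (fun _ : B => K%:E).
  apply: (@bnd_int (fun _ => K)); first exact: measurable_cst.
  by exists `|K| => _.
have h5 : {ae mu, forall (om : B) n, [set: B] om -> `|(hh n y om)%:E| <= K%:E}%E.
  by apply: aeW => om n _ /=; rewrite lee_fin; exact: hh_bound.
have [_ _ H] := @dominated_convergence _ B R mu [set: B] measurableT
  (fun n om => (hh n y om)%:E) (fun om => (FF y om)%:E) (fun _ => K%:E) h1 h2 h3 h4 h5.
have E n : (\int[mu]_(x in [set: B]) (hh n y x)%:E)%E = (Rintegral mu [set: B] y)%:E.
  rewrite -(@int_hh n y cy) /Rintegral fineK //.
  by apply: integrable_fin_num => //; exact (@cont_int (hh n y) (@hh_cont n y cy)).
move: H; rewrite (_ : (fun n => _) = (fun _ => (Rintegral mu [set: B] y)%:E)); last first.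
  by apply: funext => n; rewrite /= E.
move=> H; have := cvg_unique _ (cvg_cst _) H.
by rewrite /Rintegral => <-.
Qed.

Lemma erg_gt (G : B -> R) : measurable_fun [set: B] G ->
  (exists K, forall t, `|G t| <= K) -> (forall om, G (phi om) = G om) ->
  mu [set om : B | Rintegral mu [set: B] G < G om] = 0%E.
Proof.
move=> mG bG Gi.
set a := Rintegral mu [set: B] G.
set A := [set om : B | a < G om].
have mA : measurable A.
  have oI : open (`]a, +oo[%classic : set R) by exact: interval_open.
  have := mG measurableT _ (measurable_realfun.open_measurable oI).
  rewrite setTI; congr measurable; apply/seteqP; split => t /=;
    by rewrite in_itv /= andbT.
have inv : (phi : B -> B) @^-1` A = A.
  by apply/seteqP; split => t; rewrite /A /= (Gi t).
case: ((proj2 Hmu) A mA inv) => // A1; exfalso.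
have iG := @bnd_int G mG bG.
pose g := fun om : B => G om - a.
have mg : measurable_fun [set: B] g.
  by apply: measurable_funB => //; exact: measurable_cst.
have ig : mu.-integrable [set: B] (EFin \o g).
  apply: bnd_int => //; have [K HK] := bG; exists (K + `|a|) => t.
  by rewrite /g (le_trans (ler_normB _ _)) // lerD2r.
have g0 : Rintegral mu [set: B] g = 0.
  rewrite /g RintegralB //; last first.
    apply: (@bnd_int (fun _ => a)); first exact: measurable_cst.
    by exists `|a| => _.
  rewrite Rintegral_cst // [fine _](_ : _ = 1) ?mulr1 ?subrr //; exact: (congr1 fine (probability_setT mu)).
have mAC : measurable (~` A) by exact: measurableC.
have AC0 : mu (~` A) = 0%E by rewrite probability_setC // A1 subee.
have igA : mu.-integrable (A `|` ~` A) (EFin \o g) by rewrite setUv.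
have dAC : [disjoint A & ~` A] by rewrite /disj_set setICr.
have := Rintegral_setU mA mAC igA dAC.
rewrite setUv g0.
have -> : Rintegral mu (~` A) g = 0.
  apply/eqP; rewrite -normr_le0.
  apply: (le_trans (le_normr_Rintegral _ _)) => //.
    exact: integrableS ig.
  rewrite /Rintegral.
  have -> : (\int[mu]_(x in ~` A) (`|g x|)%:E = \int[mu]_(x in ~` A) `|(g x)%:E|)%E by [].
  rewrite integral_abs_eq0 //.
  by apply: measurable_funTS; exact: measurableT_comp.
rewrite addr0 => /esym gA0.
have : (\int[mu]_(x in A) `|(g x)%:E| = 0)%E.
  transitivity ((Rintegral mu A g)%:E); last by rewrite gA0.
  rewrite /Rintegral fineK; last first.
    by apply: integrable_fin_num => //; exact: integrableS ig.
  apply: eq_integral => t /set_mem At /=.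
  by rewrite gtr0_norm // /g subr_gt0.
have mgA : measurable_fun A (EFin \o g).
  by apply: measurable_funTS; exact: measurableT_comp.
move/(ae_eq_integral_abs mu mA mgA) => -[N [mN N0 sub]].
have AN : A `<=` N.
  move=> t At; apply: sub => /= /(_ At) /eqP.
  by rewrite eqe subr_eq0 => /eqP h; move: At; rewrite /A /= h ltxx.
have := subset_measure0 mA mN AN N0.
move=> h; have : (1 = 0 :> \bar R)%E by rewrite -[X in X = _]A1; exact: h.
by move=> /eqP; rewrite onee_eq0.
Qed.

Lemma mset_gt (G : B -> R) (c : R) : measurable_fun [set: B] G ->
  measurable [set om : B | c < G om].
Proof.
move=> mG.
have oI : open (`]c, +oo[%classic : set R) by exact: interval_open.
have := mG measurableT _ (measurable_realfun.open_measurable oI).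
rewrite setTI; congr measurable; apply/seteqP; split => t /=;
  by rewrite in_itv /= andbT.
Qed.

Lemma FF_bound x K om : continuous x -> (forall t, `|x t| <= K) -> `|FF x om| <= K.
Proof.
move=> cx xK; have hl := @FF_lim x om cx.
have hb n := @hh_bound n x K om xK.
apply/ler_normlP; split.
- rewrite lerNl; apply: (@lim_geK R _ _ _ hl) => n; have /ler_normlP [h _] := hb n; by rewrite -lerNl.
- apply: (@lim_leK R _ _ _ hl) => n; by have /ler_normlP [] := hb n.
Qed.

Lemma FF_ae x : continuous x -> exists N : set B, measurable N /\ mu N = 0%E /\
  forall om, ~ N om -> FF x om = Rintegral mu [set: B] x.
Proof.
move=> cx.
have [K xK] := @cont_bounded x cx.
have mG := @FF_mfun x cx.
have bG : exists K, forall t : B, `|FF x t| <= K.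
  by exists K => t; exact: FF_bound.
have Gi om : FF x (phi om) = FF x om by exact: FF_inv.
have mG' : measurable_fun [set: B] (\- (FF x : B -> R)) by exact: measurable_funN.
have bG' : exists K, forall t : B, `|(\- (FF x : B -> R)) t| <= K.
  by exists K => t /=; rewrite normrN; exact: FF_bound.
have Gi' om : (\- (FF x : B -> R)) (phi om) = (\- (FF x : B -> R)) om by rewrite /= Gi.
have iG : mu.-integrable [set: B] (EFin \o (FF x : B -> R)) by exact: bnd_int.
have N1 := @erg_gt (FF x) mG bG Gi.
have N2 := @erg_gt (\- (FF x : B -> R)) mG' bG' Gi'.
have IN : Rintegral mu [set: B] (\- (FF x : B -> R)) = - Rintegral mu [set: B] (FF x).
  have -> : (\- (FF x : B -> R)) = (fun om => -1 * FF x om).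
    by apply: funext => om /=; rewrite mulN1r.
  by rewrite RintegralZl // mulN1r.
rewrite IN in N2.
exists ([set om : B | Rintegral mu [set: B] (FF x) < FF x om] `|`
        [set om : B | - Rintegral mu [set: B] (FF x) < (\- (FF x : B -> R)) om]).
have m1 := @mset_gt _ (Rintegral mu [set: B] (FF x)) mG.
have m2 := @mset_gt _ (- Rintegral mu [set: B] (FF x)) mG'.
split; first exact: measurableU.
split; first by rewrite null_set_setU.
move=> om Nom; rewrite -(@int_FF x cx).
apply/eqP; rewrite eq_le; apply/andP; split.
  by rewrite leNgt; apply/negP => h; apply: Nom; left.
by rewrite leNgt; apply/negP => h; apply: Nom; right => /=; rewrite ltrN2.
Qed.

Lemma int_dual : in_dual (fun y : T -> R => Rintegral mu [set: B] y).
Proof.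
split.
  by move=> x y cx cy; rewrite /= RintegralD //; exact: cont_int.
split.
  by move=> a x cx; rewrite /= RintegralZl //; exact: cont_int.
exists 1 => x c cx xc.
have ic : mu.-integrable [set: B] (EFin \o (fun _ : B => c)).
  by apply: bnd_int; [exact: measurable_cst | exists `|c| => _].
have inc : mu.-integrable [set: B] (EFin \o (fun _ : B => - c)).
  by apply: bnd_int; [exact: measurable_cst | exists `|- c| => _].
have ix := @cont_int x cx.
have P1 : fine (mu [set: B]) = 1 by exact: (congr1 fine (probability_setT mu)).
apply/ler_normlP; split.
  rewrite lerNl mul1r.
  have := @le_Rintegral _ B R mu [set: B] (fun _ => - c) x measurableT inc ix.
  rewrite Rintegral_cst // P1 mulr1; apply => t _.
  by have /ler_normlP [] := xc t; rewrite lerNl.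
rewrite mul1r.
have := @le_Rintegral _ B R mu [set: B] x (fun _ => c) measurableT ix ic.
rewrite Rintegral_cst // P1 mulr1; apply => t _.
by have /ler_normlP [] := xc t.
Qed.

Lemma main_exists : exists om : T, forall x : T -> R, continuous x ->
  Q (dirac_fun om) x = Rintegral mu [set: B] x.
Proof.
have [b [bo bb]] := @enum_basis R T Hcpt.
have /choice [Nf HN] : forall p : seq nat * seq nat, exists N : set B,
    measurable N /\ mu N = 0%E /\
    forall om, ~ N om -> FF (gU R T b p) om = Rintegral mu [set: B] (gU R T b p).
  move=> p; apply: FF_ae; exact: gU_cont.
pose E n : set B := if unpickle n is Some p then Nf p else set0.
have En n : mu.-negligible (E n).
  rewrite /E; case: (unpickle n) => [p|]; last exact: negligible_set0.
  by have [mN [N0 _]] := HN p; apply/negligibleP.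
have [V [mV V0 UV]] := negligible_bigcup En.
have [om nV] : exists om : T, ~ V om.
  apply/existsNP => allV.
  have VT : V = [set: B] by apply/seteqP; split => // t _; exact: allV.
  move: V0; rewrite VT => h.
  have : (1 = 0 :> \bar R)%E by rewrite -(probability_setT mu); exact: h.
  by move/eqP; rewrite onee_eq0.
exists om.
apply: (@agree R T Hcpt b bo bb (Q (dirac_fun om)) (fun y => Rintegral mu [set: B] y)).
- exact: (proj1 HQ) _ (dirac_dual om).
- exact: int_dual.
- move=> c; rewrite Rintegral_cst //.
  rewrite (congr1 fine (probability_setT mu)) /= mulr1.
  have hl := @FF_lim (fun _ => c) om (@cst_continuous _ _ c).
  have : (fun n => hh n (fun _ => c) om) = (fun _ => c).
    by apply: funext => n; exact: hh_cst.
  move=> e; rewrite e in hl.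
  exact: (cvg_unique _ hl (cvg_cst c)).
- move=> p; have [_ [_ H]] := HN p; apply: H => Nom; apply: nV; apply: UV.
  by exists (pickle p) => //; rewrite /E pickleK.
Qed.

End Meas.







Theorem lemma4p1 (R : realType) (T : pseudoPMetricType R)
  (Hhaus : hausdorff_space T) (Hcpt : compact [set: T])
  (phi : T -> T) (Hphi : continuous phi)
  (w : nat -> seq R) (Q : ((T -> R) -> R) -> ((T -> R) -> R))
  (Herg : ergodic_seq phi w) (HQ : in_LXstar Q) (Hcvg : WstarO_cvg phi w Q)
  (mu : probability (borel T) R) (Hmu : phi_ergodic phi mu) :
  exists om : T, forall x : T -> R, continuous x ->
    Q (dirac_fun om) x = Rintegral mu [set: borel T] x.
Proof. exact: (@main_exists R T Hcpt phi Hphi w Q Herg HQ Hcvg mu Hmu). Qed.
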